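(* A set $\mathbf D$ of tilings is a Condorcet super-domain if and only if for any three tilings $T_1,T_2,T_3\in\mathbf D$, the set $sm(T_1,T_2,T_3)=(T_1\cap T_2)\cup(T_2\cap T_3)\cup(T_1\cap T_3)$ is a tiling.
   Context: Fix an integer $n\ge 3$ and write $[n]=\{1,\dots,n\}$. Let $\Lambda$ be the set of 3-element subsets of $[n]$; a triple $\{i,j,k\}$ with $i<j<k$ is written $ijk$. For a 4-element subset $F=\{i<j<k<l\}$ of $[n]$, the stick of $F$ is the sequence $(ijk,\ ijl,\ ikl,\ jkl)$. A tiling (the inversion set of a rhombus tiling of the zonogon $Z(n;2)$) is a subset $T\subseteq\Lambda$ such that for every 4-element $F\subseteq[n]$, $T\cap\mathrm{stick}(F)$ is an initial segment or a final segment of the stick (empty set and whole stick allowed). For a finite set $V$ of odd cardinality and tilings $(T_v)_{v\in V}$, $sm((T_v)_{v\in V})$ is the set of triples lying in $T_v$ for more than $|V|/2$ indices $v$. A set $\mathbf D$ of tilings is a Condorcet super-domain if for every finite $V$ of odd cardinality and every family $(T_v)_{v\in V}$ with all $T_v\in\mathbf D$, $sm((T_v)_{v\in V})$ is a tiling. *)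

(* Defs.v *)
From mathcomp Require Import all_boot.
Set Implicit Arguments. Unset Strict Implicit. Unset Printing Implicit Defensive.

(* [n] is modelled by 'I_n (elements 0..n-1, same order as 1..n).
   A triple is a 3-element subset of 'I_n. *)
Definition Lambda (n : nat) : {set {set 'I_n}} := [set A : {set 'I_n} | #|A| == 3].

Definition init_or_final_segment (b : seq bool) : Prop :=
  exists m, m <= size b /\
    (b = nseq m true ++ nseq (size b - m) false \/
     b = nseq m false ++ nseq (size b - m) true).

Definition stick (n : nat) (i j k l : 'I_n) : seq {set 'I_n} :=
  [:: [set i; j; k]; [set i; j; l]; [set i; k; l]; [set j; k; l]].

Definition is_tiling (n : nat) (T : {set {set 'I_n}}) : Prop :=
  T \subset Lambda n /\
  forall i j k l : 'I_n, i < j -> j < k -> k < l ->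
    init_or_final_segment [seq A \in T | A <- stick i j k l].

Definition sm (n : nat) (V : finType) (T : V -> {set {set 'I_n}}) : {set {set 'I_n}} :=
  [set A : {set 'I_n} | #|V| < 2 * #|[set v : V | A \in T v]|].

Definition condorcet_super_domain (n : nat) (D : {set {set {set 'I_n}}}) : Prop :=
  forall (V : finType) (T : V -> {set {set 'I_n}}),
    odd #|V| -> (forall v, T v \in D) -> is_tiling (sm T).

(* Main.v *)
Require Import Defs.
From mathcomp Require Import all_boot.
From mathcomp Require Import zify.
Set Implicit Arguments. Unset Strict Implicit.

Definition ok3 (x y z : bool) := (x == z) ==> (x == y).
Definition maj (x y z : bool) := (x && y || y && z) || x && z.

Ltac segtac m := exists m; split; [done | first [by left | by right]].

Lemma seg4 b1 b2 b3 b4 : init_or_final_segment [:: b1; b2; b3; b4] <->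
  [&& ok3 b1 b2 b3, ok3 b1 b2 b4, ok3 b1 b3 b4 & ok3 b2 b3 b4].
Proof.
split.
  move=> [m [hm [H|H]]]; case: m hm H => [|[|[|[|[|m]]]]] //= _ [-> -> -> ->] //.
case: b1; case: b2; case: b3; case: b4 => //= _;
 first [segtac 0 | segtac 1 | segtac 2 | segtac 3 | segtac 4].
Qed.

Lemma meet_nonempty (V : finType) (X Y : {set V}) :
  #|V| < 2 * #|X| -> #|V| < 2 * #|Y| -> exists v, (v \in X) && (v \in Y).
Proof.
move=> hX hY.
have hU := cardsUI X Y.
have hm : #|X :|: Y| <= #|V| by apply: max_card.
have : 0 < #|X :&: Y| by rewrite ltnNge leqn0; apply/negP => /eqP h0;
  rewrite h0 addn0 in hU; rewrite hU in hm; move: hX hY hm; clear; lia.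
by case/card_gt0P => v; rewrite inE => h; exists v.
Qed.

Lemma maj_side (V : finType) (p : V -> bool) (x : bool) :
  odd #|V| -> (#|V| < 2 * #|[set v | p v]|) == x ->
  #|V| < 2 * #|[set v | p v == x]|.
Proof.
move=> ho; case: x => /eqP h.
  by rewrite (_ : [set v | p v == true] = [set v | p v]) //; apply/setP => v; rewrite !inE eqb_id.
have -> : [set v | p v == false] = ~: [set v | p v] by apply/setP => v; rewrite !inE; case: (p v).
have hC := cardsC [set v | p v].
move/negbT: h; rewrite -leqNgt => h.
move: hC h; rewrite -(odd_double_half #|V|) ho -!muln2 => hC h.
move: hC h; set k := #|[set v | p v]|; set k' := #|~: _|; move=> hC h.
lia.
Qed.

Lemma key0 (V : finType) (a b c : V -> bool) (x y z : bool) :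
  (forall v, ok3 (a v) (b v) (c v)) ->
  (forall u w z, ok3 (maj (a u) (a w) (a z)) (maj (b u) (b w) (b z)) (maj (c u) (c w) (c z))) ->
  #|V| < 2 * #|[set v | a v == x]| -> #|V| < 2 * #|[set v | b v == y]| ->
  #|V| < 2 * #|[set v | c v == z]| -> ok3 x y z.
Proof.
move=> h1 h3 ha hb hc.
rewrite /ok3; apply/implyP => /eqP hxz; apply: contraT => /eqP hxy.
have [u /andP[]] := meet_nonempty ha hb; rewrite !inE => /eqP au /eqP bu.
have [w /andP[]] := meet_nonempty hb hc; rewrite !inE => /eqP bw /eqP cw.
have [t /andP[]] := meet_nonempty ha hc; rewrite !inE => /eqP at' /eqP ct.
have := h3 u w t; have := h1 u; have := h1 w; have := h1 t.
clear ha hb hc; rewrite au bu bw cw at' ct -hxz; clear hxz au bu bw cw at' ct; move: hxy; rewrite /ok3 /maj.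
case: x; case: y => //= _; case: (c u); case: (a w); case: (b t) => //.
Qed.

Lemma key (V : finType) (a b c : V -> bool) :
  odd #|V| -> (forall v, ok3 (a v) (b v) (c v)) ->
  (forall u w z, ok3 (maj (a u) (a w) (a z)) (maj (b u) (b w) (b z)) (maj (c u) (c w) (c z))) ->
  ok3 (#|V| < 2 * #|[set v | a v]|) (#|V| < 2 * #|[set v | b v]|) (#|V| < 2 * #|[set v | c v]|).
Proof.
move=> ho h1 h3; apply: key0 h1 h3 _ _ _; exact: maj_side ho (eqxx _).
Qed.

Theorem theorem1 (n : nat) (hn : 3 <= n) (D : {set {set {set 'I_n}}})
    (hD : forall T, T \in D -> is_tiling T) :
  condorcet_super_domain D <->
  (forall T1 T2 T3, T1 \in D -> T2 \in D -> T3 \in D ->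
     is_tiling (((T1 :&: T2) :|: (T2 :&: T3)) :|: (T1 :&: T3))).
Proof.
split.
  move=> hC T1 T2 T3 h1 h2 h3.
  pose T := fun v : 'I_3 => tnth [tuple T1; T2; T3] v.
  have hTD : forall v, T v \in D by case=> [[|[|[|m]]] hm] //.
  have := hC _ T; rewrite card_ord => /(_ erefl hTD).
  have -> : sm T = ((T1 :&: T2) :|: (T2 :&: T3)) :|: (T1 :&: T3); last by [].
  apply/setP => A; rewrite !inE -sum1_card big_mkcond !big_ord_recl big_ord0 !inE /=.
  rewrite /T /tnth /=.
  rewrite /T /tnth /= card_ord.
  by case: (A \in T1); case: (A \in T2); case: (A \in T3).
move=> h3 V T hodd hT; split.
  apply/subsetP => A; rewrite inE => hA.
  have : 0 < #|[set v | A \in T v]| by move: hA; case: #|_|.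
  case/card_gt0P => v; rewrite inE => hv.
  have [hs _] := hD _ (hT v); exact: (subsetP hs _ hv).
move=> i j k l hij hjk hkl.
have G1 v : [&& ok3 ([set i; j; k] \in T v) ([set i; j; l] \in T v) ([set i; k; l] \in T v),
                ok3 ([set i; j; k] \in T v) ([set i; j; l] \in T v) ([set j; k; l] \in T v),
                ok3 ([set i; j; k] \in T v) ([set i; k; l] \in T v) ([set j; k; l] \in T v) &
                ok3 ([set i; j; l] \in T v) ([set i; k; l] \in T v) ([set j; k; l] \in T v)].
  by have [_ h] := hD _ (hT v); have := h i j k l hij hjk hkl; rewrite /= seg4.
have G3 u w z : let M := ((T u :&: T w) :|: (T w :&: T z)) :|: (T u :&: T z) in
             [&& ok3 ([set i; j; k] \in M) ([set i; j; l] \in M) ([set i; k; l] \in M),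
                ok3 ([set i; j; k] \in M) ([set i; j; l] \in M) ([set j; k; l] \in M),
                ok3 ([set i; j; k] \in M) ([set i; k; l] \in M) ([set j; k; l] \in M) &
                ok3 ([set i; j; l] \in M) ([set i; k; l] \in M) ([set j; k; l] \in M)].
  by have [_ h] := h3 _ _ _ (hT u) (hT w) (hT z); have := h i j k l hij hjk hkl; rewrite /= seg4.
rewrite /= seg4 !inE.
apply/and4P; split; apply: key => // [v|u w z];
  first [by case/and4P: (G1 v) | by case/and4P: (G3 u w z); rewrite !inE].
Qed.
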